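(* Let $\Gamma$ be a distance-regular graph with valency $k$ and diameter $D\geq 2$, and let $\alpha=\lceil \frac{k}{a_1+1}\rceil$. Then $$c_2-1\geq \frac{\alpha(a_1+1)-k}{\binom{\alpha}{2}},$$ and if equality holds then $\Gamma$ is a Terwilliger graph.
   Context: A connected graph $\Gamma$ of diameter $D$ is distance-regular if there are integers $b_i,c_i$ ($0\le i\le D$) such that for any two vertices $x,y$ at distance $i$, exactly $c_i$ neighbours of $y$ are at distance $i-1$ from $x$ and exactly $b_i$ neighbours of $y$ are at distance $i+1$ from $x$. Then $\Gamma$ is regular of valency $k=b_0$, and $a_i:=k-b_i-c_i$. A Terwilliger graph is a connected non-complete graph such that for any two vertices $u,v$ at distance two, the subgraph induced on their common neighbours is a clique of size $\mu$, for some fixed $\mu\geq 1$. *)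

(* Defs.v *)
From mathcomp Require Import all_boot all_order all_algebra.
Set Implicit Arguments. Unset Strict Implicit. Unset Printing Implicit Defensive.

Section Graph.
Variable T : finType.
Variable e : rel T.

Definition simple_graph := symmetric e /\ irreflexive e.

Fixpoint ball (n : nat) (x : T) : {set T} :=
  match n with
  | 0 => [set x]
  | n.+1 => ball n x :|: [set y | [exists z in ball n x, e z y]]
  end.

Definition connected_graph := forall x y : T, exists n, y \in ball n x.

(* graph distance: least n with y in ball n x (all distances in a connected
   graph on T are < #|T|; the value #|T| would signal "unreachable") *)
Definition dist (x y : T) : nat :=
  find (fun n => y \in ball n x) (iota 0 #|T|).

Definition diameter : nat := \max_(x : T) \max_(y : T) dist x y.

Definition distance_regular (b c : nat -> nat) :=
  connected_graph /\
  forall x y : T,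
    (0 < dist x y -> #|[set z | e y z & dist x z == (dist x y).-1]| = c (dist x y)) /\
    #|[set z | e y z & dist x z == (dist x y).+1]| = b (dist x y).

Definition is_clique (A : {set T}) :=
  forall u v, u \in A -> v \in A -> u != v -> e u v.

Definition common_nbrs (u v : T) : {set T} := [set z | e u z & e v z].

Definition complete_graph := forall u v : T, u != v -> e u v.

Definition terwilliger :=
  connected_graph /\ ~ complete_graph /\
  exists mu : nat, 1 <= mu /\
    forall u v : T, dist u v = 2 ->
      is_clique (common_nbrs u v) /\ #|common_nbrs u v| = mu.

End Graph.

(* Main.v *)
Require Import Defs.
From mathcomp Require Import all_boot all_order all_algebra.
From mathcomp Require Import zify.
Set Implicit Arguments. Unset Strict Implicit.

Lemma ball_sub (T : finType) (e : rel T) n x : ball e n x \subset ball e n.+1 x.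
Proof. by rewrite /= subsetUl. Qed.

Lemma in_ball1 (T : finType) (e : rel T) x y : (y \in ball e 1 x) = (y == x) || e x y.
Proof.
rewrite /= !inE; congr (_ || _); apply/existsP/idP => [[z]|h].
  by rewrite inE => /andP[/eqP -> ].
by exists x; rewrite !inE eqxx.
Qed.

Lemma ball_step (T : finType) (e : rel T) n x z y :
  z \in ball e n x -> e z y -> y \in ball e n.+1 x.
Proof. move=> hz hy; rewrite /= !inE; apply/orP; right; apply/existsP; exists z; by rewrite hz. Qed.

Lemma dist_le (T : finType) (e : rel T) n x y : y \in ball e n x -> dist e x y <= n.
Proof.
move=> hy; rewrite /dist; case: (ltnP n #|T|) => h.
  rewrite leqNgt; apply/negP => /(before_find 0); by rewrite nth_iota // add0n hy.
apply: leq_trans h; by rewrite -{2}(size_iota 0 #|T|) find_size.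
Qed.

Lemma dist_lt (T : finType) (e : rel T) i x y : i < dist e x y -> y \notin ball e i x.
Proof.
move=> hi; rewrite /dist in hi.
have hs : i < #|T| by apply: leq_trans hi _; rewrite -{2}(size_iota 0 #|T|) find_size.
by have := before_find 0 hi; rewrite nth_iota // add0n => ->.
Qed.

Lemma dist_in (T : finType) (e : rel T) x y : dist e x y < #|T| -> y \in ball e (dist e x y) x.
Proof.
move=> h; rewrite /dist in h *.
have hh : has (fun n => y \in ball e n x) (iota 0 #|T|) by rewrite has_find size_iota.
by have := nth_find 0 hh; rewrite nth_iota // add0n.
Qed.

Lemma dist0 (T : finType) (e : rel T) x y : (dist e x y == 0) = (y == x).
Proof.
apply/idP/idP => [/eqP h|/eqP ->].
  have hT : 0 < #|T| by apply/card_gt0P; exists x.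
  by have := @dist_in _ e x y; rewrite h => /(_ hT); rewrite /= inE.
by rewrite -leqn0 dist_le //= inE.
Qed.

Lemma dist1 (T : finType) (e : rel T) x y : irreflexive e ->
  (dist e x y == 1) = e x y.
Proof.
move=> irr; apply/idP/idP => [/eqP h|h].
  have yx : y != x by rewrite -(@dist0 _ e) h.
  have hT : 1 < #|T| by apply/card_gt1P; exists x, y; rewrite eq_sym yx.
  by have := @dist_in _ e x y; rewrite h => /(_ hT); rewrite (@in_ball1 _ e) (negbTE yx).
have yx : y != x by apply: contraTneq h => ->; rewrite irr.
rewrite eqn_leq dist_le ?in_ball1 ?h ?orbT //=.
by rewrite lt0n (@dist0 _ e) yx.
Qed.

Lemma dist2 (T : finType) (e : rel T) x s s' : simple_graph e ->
  s != s' -> ~~ e s s' -> e x s -> e x s' -> dist e s s' = 2.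
Proof.
move=> [sym irr] ne ns xs xs'.
apply/eqP; rewrite eqn_leq.
have : s' \in ball e 2 s.
  apply: (ball_step (z:=x)) => //; by rewrite in_ball1 sym xs orbT.
move=> /(dist_le) ->; rewrite ltnNge; apply/negP => h.
move: h; rewrite leq_eqVlt ltnS leqn0 (@dist0 _ e) (@dist1 _ e _ _ irr) (negbTE ns) /=.
by apply/negP; rewrite eq_sym.
Qed.
Lemma walk2 (T : finType) (e : rel T) x m : forall y,
  y \in ball e m x -> y \notin ball e 1 x ->
  exists w z, [/\ e x w, e w z & z \notin ball e 1 x].
Proof.
elim: m => [|m IH] y.
  by move=> h; rewrite (subsetP (ball_sub e 0 x) _ h).
rewrite [ball e m.+1 x]/= inE => /orP[/IH//|].
rewrite inE => /existsP[w /andP[wm ew]] yn.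
case: (boolP (w \in ball e 1 x)) => w1.
  move: w1; rewrite in_ball1 => /orP[/eqP wx|xw].
    by move: yn; rewrite in_ball1 -wx ew orbT.
  by exists w, y.
by apply: (IH w).
Qed.

Lemma diam_triple (T : finType) (e : rel T) : simple_graph e -> connected_graph e ->
  2 <= diameter e -> exists x w z, [/\ e x w, e w z, z != x & ~~ e x z].
Proof.
move=> [sym irr] con hd.
have [x [y hxy]] : exists x y, 1 < dist e x y.
  case: (boolP [exists x, exists y, 1 < dist e x y]).
    by move=> /existsP[x /existsP[y h]]; exists x, y.
  move=> /existsPn hn; exfalso; move: hd; apply/negP; rewrite -ltnNge ltnS.
  apply/bigmax_leqP => x _; apply/bigmax_leqP => y _.
  by move: (hn x) => /existsPn /(_ y); rewrite -leqNgt.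
have y1 : y \notin ball e 1 x by apply: dist_lt.
have [m hm] := con x y.
have [w [z [xw wz z1]]] := walk2 hm y1.
exists x, w, z; move: z1; rewrite in_ball1 negb_or => /andP[-> ->]; done.
Qed.

Lemma valency (T : finType) (e : rel T) b c : simple_graph e -> distance_regular e b c ->
  forall y, #|[set z | e y z]| = b 0.
Proof.
move=> [sym irr] [_ hDR] y; have [_ hb] := hDR y y.
have d0 : dist e y y = 0 by apply/eqP; rewrite dist0.
rewrite d0 in hb; rewrite -hb; apply: eq_card => z; rewrite !inE.
by rewrite (@dist1 _ e _ _ irr) andbb.
Qed.

Lemma a1_count (T : finType) (e : rel T) b c : simple_graph e -> distance_regular e b c ->
  forall x y, e x y -> #|[set z | e y z & e x z]| = b 0 - b 1 - c 1.
Proof.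
move=> [sym irr] hd x y xy; have := valency (conj sym irr) hd y.
have [_ hDR] := hd; have [hc hb] := hDR x y.
have d1 : dist e x y = 1 by apply/eqP; rewrite (@dist1 _ e _ _ irr).
rewrite d1 /= in hc hb; have {}hc := hc isT.
rewrite -(cardsID [set z | dist e x z == 0] [set z | e y z]) -(cardsID [set z | dist e x z == 1] (_ :\: _)).
have -> : [set z | e y z] :&: [set z | dist e x z == 0] = [set z | e y z & dist e x z == 0].
  by apply/setP => z; rewrite !inE.
have -> : ([set z | e y z] :\: [set z | dist e x z == 0]) :&: [set z | dist e x z == 1]
   = [set z | e y z & e x z].
  apply/setP => z; rewrite !inE (@dist1 _ e _ _ irr).
  case xz: (e x z); rewrite ?andbF //; move: xz; rewrite -(@dist1 _ e _ _ irr) => /eqP ->.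
  by rewrite !andbT.
have -> : ([set z | e y z] :\: [set z | dist e x z == 0]) :\: [set z | dist e x z == 1]
   = [set z | e y z & dist e x z == 2].
  apply/setP => z; rewrite !inE; case yz: (e y z); rewrite ?andbF //=.
  have : dist e x z <= 2.
    by apply: dist_le; apply: (ball_step (z:=y)); rewrite // in_ball1 xy orbT.
  by case: (dist e x z) => [|[|[|n]]].
rewrite hc hb => <-; lia.
Qed.

Lemma c2_count (T : finType) (e : rel T) b c : simple_graph e -> distance_regular e b c ->
  forall u v, dist e u v = 2 -> #|common_nbrs e u v| = c 2.
Proof.
move=> [sym irr] [_ hDR] u v d2; have [hc _] := hDR u v.
rewrite d2 /= in hc; rewrite -(hc isT); apply: eq_card => z; rewrite !inE.
by rewrite (@dist1 _ e _ _ irr) andbC.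
Qed.

Lemma P_bound (T : finType) (F : T -> T -> nat) (S : {set T}) B :
  (forall s s', s \in S -> s' \in S -> s != s' -> F s s' <= B) ->
  \sum_(s in S) \sum_(s' in S :\ s) F s s' <= #|S| * (#|S|.-1 * B).
Proof.
move=> hF; rewrite -sum_nat_const; apply: leq_sum => s sS.
have -> : #|S|.-1 = #|S :\ s| by rewrite (cardsD1 s S) sS.
rewrite -sum_nat_const; apply: leq_sum => s'; rewrite !inE => /andP[ne s'S].
by apply: hF; rewrite // eq_sym.
Qed.

Lemma P_bound_strict (T : finType) (F : T -> T -> nat) (S : {set T}) B u v :
  (forall s s', s \in S -> s' \in S -> s != s' -> F s s' <= B) ->
  u \in S -> v \in S -> u != v -> F u v < B -> F v u < B ->
  (\sum_(s in S) \sum_(s' in S :\ s) F s s') + 2 <= #|S| * (#|S|.-1 * B).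
Proof.
move=> hF uS vS uv fuv fvu.
have vSu : v \in S :\ u by rewrite !inE eq_sym uv.
have uSv : u \in S :\ v by rewrite !inE uv.
have inner : forall s t, s \in S -> t \in S :\ s -> F s t < B ->
    (\sum_(s' in S :\ s) F s s') < #|S|.-1 * B.
  move=> s t sS tSs hlt.
  rewrite (big_setD1 t tSs) /=.
  have hc : #|S|.-1 = (#|S :\ s :\ t|).+1.
    by rewrite (cardsD1 s S) sS (cardsD1 t (S :\ s)) tSs.
  rewrite hc mulSn; apply: leq_ltn_trans (_ : F s t + #|S :\ s :\ t| * B < _).
    rewrite leq_add2l -sum_nat_const; apply: leq_sum => s'; rewrite !inE.
    move=> /and3P[_ ne s'S]; by apply: hF; rewrite // eq_sym.
  by rewrite ltn_add2r.
have hu := inner u v uS vSu fuv.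
have hv := inner v u vS uSv fvu.
rewrite (big_setD1 u uS) (big_setD1 v vSu) /=.
have hrest : \sum_(s in S :\ u :\ v) \sum_(s' in S :\ s) F s s' <= #|S :\ u :\ v| * (#|S|.-1 * B).
  rewrite -sum_nat_const; apply: leq_sum => s; rewrite !inE => /and3P[_ _ sS].
  have -> : #|S|.-1 = #|S :\ s| by rewrite (cardsD1 s S) sS.
  rewrite -sum_nat_const; apply: leq_sum => s'; rewrite !inE => /andP[ne s'S].
  by apply: hF; rewrite // eq_sym.
have hc : #|S| = (#|S :\ u :\ v|).+2.
  by rewrite (cardsD1 u S) uS (cardsD1 v (S :\ u)) vSu.
move: hrest; rewrite hc /= => hrest.
move: hu hv; rewrite hc /= => hu hv.
set X := (_ * B) in hu hv hrest *.
rewrite !mulSn; lia.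
Qed.

Definition nc (T : finType) (e : rel T) (s z : T) : bool := (z == s) || e s z.
Definition Gm (T : finType) (e : rel T) (D : {set T}) (s s' : T) : nat :=
  \sum_(z in D) (nc e s z && nc e s' z).
Definition mm (T : finType) (e : rel T) (S : {set T}) (z : T) : nat :=
  \sum_(s in S) nc e s z.

Lemma sum_m (T : finType) (e : rel T) (D S : {set T}) a :
  (forall s, s \in D -> \sum_(z in D) nc e s z = a.+1) -> S \subset D ->
  \sum_(z in D) mm e S z = #|S| * a.+1.
Proof.
move=> hA sub; rewrite /mm exchange_big /= -sum_nat_const; apply: eq_bigr => s sS.
by apply: hA; apply: (subsetP sub).
Qed.

Lemma sum_m2 (T : finType) (e : rel T) (D S : {set T}) :
  \sum_(z in D) mm e S z * mm e S z = \sum_(s in S) \sum_(s' in S) Gm e D s s'.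
Proof.
rewrite /mm /Gm.
under eq_bigr => z _ do rewrite big_distrl /=.
under eq_bigr => z _ do under eq_bigr => s _ do rewrite big_distrr /=.
rewrite exchange_big /=; apply: eq_bigr => s _.
rewrite exchange_big /=; apply: eq_bigr => s' _.
by apply: eq_bigr => z _; rewrite mulnb.
Qed.

Lemma count_ineq (T : finType) (e : rel T) (D S : {set T}) a :
  (forall s, s \in D -> \sum_(z in D) nc e s z = a.+1) -> S \subset D ->
  2 * (#|S| * a.+1) <= (\sum_(s in S) \sum_(s' in S :\ s) Gm e D s s') + 2 * #|D|.
Proof.
move=> hA sub.
have h1 := sum_m hA sub.
have h2 := sum_m2 e D S.
have h3 : \sum_(s in S) \sum_(s' in S) Gm e D s s' =
          #|S| * a.+1 + \sum_(s in S) \sum_(s' in S :\ s) Gm e D s s'.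
  rewrite -sum_nat_const -big_split /=; apply: eq_bigr => s sS.
  rewrite (big_setD1 s sS) /=; congr (_ + _).
  rewrite /Gm; under eq_bigr => z _ do rewrite andbb.
  by apply: hA; apply: (subsetP sub).
have h4 : \sum_(z in D) (mm e S z + mm e S z + mm e S z) <= \sum_(z in D) (mm e S z * mm e S z + 2).
  apply: leq_sum => z _; case: (mm e S z) => [|[|m]] //; nia.
move: h4; rewrite !big_split /= h1 h2 h3 sum_nat_const; lia.
Qed.

Definition indep (T : finType) (e : rel T) (S : {set T}) :=
  forall s s', s \in S -> s' \in S -> s != s' -> ~~ e s s'.

Lemma greedy (T : finType) (e : rel T) (D : {set T}) a al : symmetric e ->
  (forall s, s \in D -> \sum_(z in D) nc e s z = a.+1) ->
  (forall t, t < al -> t * a.+1 < #|D|) ->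
  forall n (S : {set T}), al - #|S| <= n -> S \subset D -> indep e S -> #|S| <= al ->
  exists S' : {set T}, [/\ S \subset S', S' \subset D, indep e S' & #|S'| = al].
Proof.
move=> sym hA hal; elim => [|n IH] S hn sub ind hS.
  by exists S; split => //; apply/eqP; rewrite eqn_leq hS; lia.
case: (ltnP #|S| al) => hlt; last first.
  by exists S; split => //; apply/eqP; rewrite eqn_leq hS hlt.
have := hal _ hlt; rewrite -(sum_m hA sub) => hlt2.
case: (boolP [exists z in D, mm e S z == 0]); last first.
  move=> /exists_inPn hn0; exfalso; move: hlt2; apply/negP; rewrite -leqNgt.
  rewrite -sum1_card; apply: leq_sum => z zD; by rewrite lt0n hn0.
move=> /exists_inP[z zD /eqP m0].
have hz : forall s, s \in S -> ~~ nc e s z.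
  move=> s sS; apply/negP => hs; move: m0; rewrite /mm (big_setD1 s sS) /= hs.
  by [].
have zS : z \notin S by apply/negP => zS; move: (hz z zS); rewrite /nc eqxx.
have [S' [s1 s2 s3 s4]] : exists S' : {set T}, [/\ z |: S \subset S', S' \subset D, indep e S' & #|S'| = al].
  apply: IH.
  - by rewrite cardsU1 zS; lia.
  - by rewrite subUset sub1set zD sub.
  - move=> s s'; rewrite !inE => /orP[/eqP->|sS] /orP[/eqP->|s'S].
    + by rewrite eqxx.
    + move=> _; have := hz s' s'S; rewrite /nc negb_or sym => /andP[_ ->]; done.
    + move=> _; have := hz s sS; rewrite /nc negb_or => /andP[_ ->]; done.
    + by apply: ind.
  - by rewrite cardsU1 zS.
exists S'; split => //; apply: subset_trans s1; apply: subsetUr.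
Qed.

Lemma sumb_card (T : finType) (A : {set T}) (P : pred T) :
  \sum_(z in A) (P z : nat) = #|[set z in A | P z]|.
Proof.
rewrite -sum1_card big_mkcond [RHS]big_mkcond /=; apply: eq_bigr => z _.
by rewrite !inE; case: (z \in A); case: (P z).
Qed.

Lemma hA_local (T : finType) (e : rel T) b c : simple_graph e -> distance_regular e b c ->
  forall x s, s \in [set y | e x y] ->
  \sum_(z in [set y | e x y]) nc e s z = (b 0 - b 1 - c 1).+1.
Proof.
move=> hs hd x s; rewrite inE => xs; have [sym irr] := hs.
rewrite sumb_card -(a1_count hs hd xs).
have -> : [set z in [set y | e x y] | nc e s z] = s |: [set z | e s z & e x z].
  apply/setP => z; rewrite !inE /nc; case: (eqVneq z s) => [->|] //=.
  by rewrite xs.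
  by move=> _; rewrite andbC.
by rewrite cardsU1 !inE irr.
Qed.

Lemma Gm_le (T : finType) (e : rel T) x s s' (Y : {set T}) : simple_graph e ->
  e x s -> e x s' -> s != s' -> ~~ e s s' -> (forall y, y \in Y -> ~~ e x y) ->
  Gm e [set y | e x y] s s' <= #|common_nbrs e s s' :\: Y|.
Proof.
move=> [sym irr] xs xs' ne ns hY; rewrite /Gm sumb_card; apply: subset_leq_card.
apply/subsetP => z; rewrite !inE /nc => /andP[xz /andP[h1 h2]].
have zs : z != s by apply: contraNneq ns => zs; move: h2; rewrite zs (negbTE ne) /= sym.
have zs' : z != s' by apply: contraNneq ns => zs'; move: h1; rewrite zs' eq_sym (negbTE ne) /=.
move: h1 h2; rewrite (negbTE zs) (negbTE zs') /= => -> ->; rewrite !andbT.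
by apply/negP => /hY; rewrite xz.
Qed.

Import Order.TTheory GRing.Theory Num.Theory.
From mathcomp Require Import lra.

Lemma rat_le (al a1 k c2 : nat) : 1 < al -> 0 < c2 ->
  al * (a1 + 1) <= k + 'C(al, 2) * (c2 - 1) ->
  (((al * (a1 + 1))%:R - k%:R) / ('C(al, 2))%:R <= (c2%:R - 1 : rat))%R.
Proof.
move=> hal hc h.
have Cp : 0 < 'C(al, 2) by rewrite bin_gt0.
rewrite ler_pdivrMr ?ltr0n //.
have H : ((al * (a1 + 1))%:R <= (k + 'C(al, 2) * (c2 - 1))%:R :> rat)%R by rewrite ler_nat.
move: H; rewrite natrD (natrM _ 'C(al, 2) (c2 - 1)) natrB //.
move=> H; rewrite mulrBl mul1r; lra.
Qed.

Lemma rat_lt (al a1 k c2 : nat) : 1 < al -> 0 < c2 ->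
  al * (a1 + 1) < k + 'C(al, 2) * (c2 - 1) ->
  (((al * (a1 + 1))%:R - k%:R) / ('C(al, 2))%:R < (c2%:R - 1 : rat))%R.
Proof.
move=> hal hc h.
have Cp : 0 < 'C(al, 2) by rewrite bin_gt0.
rewrite ltr_pdivrMr ?ltr0n //.
have H : ((al * (a1 + 1))%:R < (k + 'C(al, 2) * (c2 - 1))%:R :> rat)%R by rewrite ltr_nat.
move: H; rewrite natrD (natrM _ 'C(al, 2) (c2 - 1)) natrB //.
move=> H; rewrite mulrBl mul1r; lra.
Qed.

Local Open Scope ring_scope.

Theorem theorem4 (T : finType) (e : rel T) (b c : nat -> nat) :
  simple_graph e -> distance_regular e b c -> (2 <= diameter e)%N ->
  let k := b 0%N in
  let a1 := (k - b 1%N - c 1%N)%N in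
  let alpha := ((k + a1) %/ (a1 + 1))%N in   (* = ceil (k / (a1+1)) *)
  let q := ((alpha * (a1 + 1))%:R - k%:R) / ('C(alpha, 2))%:R : rat in
  ((c 2%N)%:R - 1 >= q) /\ ((c 2%N)%:R - 1 = q -> terwilliger e).
Proof.
move=> hs hd hdiam k a1 al q.
have [sym irr] := hs; have con := hd.1.
have [x0 [w0 [z0 [xw wz zx nxz]]]] := diam_triple hs con hdiam.
have d2 : dist e x0 z0 = 2%N.
  by apply: (dist2 (x:=w0)) => //; rewrite 1?eq_sym // sym.
have c2pos : (0 < c 2)%N.
  rewrite -(c2_count hs hd d2); apply/card_gt0P; exists w0; by rewrite !inE xw sym.
have terw : (forall u v, dist e u v = 2%N -> is_clique e (common_nbrs e u v)) -> terwilliger e.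
  move=> hcl; split => //; split.
    move=> hcomp; have := hcomp x0 z0; rewrite eq_sym zx => /(_ isT).
    by rewrite (negbTE nxz).
  exists (c 2%N); split => // u v duv; split; [exact: hcl | exact: (c2_count hs hd)].
have terw1 : c 2%N = 1%N -> terwilliger e.
  move=> h1; apply: terw => u v duv u' v' hu hv ne; exfalso.
  have := c2_count hs hd duv; rewrite h1 => /eqP /cards1P [y hy].
  rewrite hy !inE in hu hv; by rewrite (eqP hu) (eqP hv) eqxx in ne.
case: (leqP al 1) => hal.
  have C0 : 'C(al, 2) = 0%N by rewrite bin_small // ltnS.
  have q0 : q = 0 by rewrite /q C0 invr0 mulr0.
  rewrite q0; split; first by rewrite subr_ge0 ler1n.
  move=> /eqP; rewrite subr_eq0 pnatr_eq1 => /eqP; exact: terw1.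
pose D x := [set y | e x y].
have hA : forall x s, s \in D x -> (\sum_(z in D x) nc e s z = a1.+1)%N := hA_local hs hd.
have hk : forall x, #|D x| = k := valency hs hd.
have hal' : forall x t, (t < al)%N -> (t * a1.+1 < #|D x|)%N.
  move=> x t ht; rewrite hk; move: ht; rewrite /al leq_divRL ?addn1 //; lia.
have Gb : forall x s s', s \in D x -> s' \in D x -> s != s' -> ~~ e s s' ->
    (Gm e (D x) s s' <= c 2%N - 1)%N.
  move=> x s s'; rewrite !inE => xs xs' ne ns.
  apply: leq_trans (Gm_le (Y := [set x]) hs xs xs' ne ns _) _.
    by move=> y; rewrite inE => /eqP ->; rewrite irr.
  rewrite -(c2_count hs hd (dist2 hs ne ns xs xs')).
  rewrite (cardsD1 x (common_nbrs e s s')) [x \in _]inE.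
  by rewrite -(sym x) -(sym x) xs xs' add1n subn1.
have core : forall x (S0 : {set T}), S0 \subset D x -> indep e S0 -> (#|S0| <= al)%N ->
    exists S : {set T}, [/\ S0 \subset S, S \subset D x, indep e S & #|S| = al].
  move=> x S0 sub ind hS0; apply: (greedy sym (hA x) (hal' x) (n := al)) => //.
  exact: leq_subr.
have bin : (al * al.-1 = 2 * 'C(al, 2))%N by rewrite -(bin1 al.-1) mul_bin_diag.
split.
  have i0 : indep e set0 by move=> s s'; rewrite inE.
  have [S [_ sub ind hS]] := core x0 set0 (sub0set _) i0 ltac:(by rewrite cards0).
  have h1 := count_ineq (hA x0) sub; rewrite hk hS in h1.
  have h2 := P_bound (F := Gm e (D x0)) (S := S) (B := (c 2%N - 1)%N).
  have {h2} h2 : (\sum_(s in S) \sum_(s' in S :\ s) Gm e (D x0) s s' <= al * (al.-1 * (c 2%N - 1)))%N.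
    rewrite -hS; apply: h2 => s s' sS s'S ne; apply: Gb; rewrite ?(subsetP sub) //.
    exact: ind.
  rewrite mulnA bin -mulnA in h2.
  apply: rat_le => //; rewrite addn1.
  move: h1 h2; set P := (\sum_(s in S) _)%N; set Y := ('C(al, 2) * _)%N; set A := (al * _)%N.
  lia.
move=> hq; apply: terw => u v duv u' v' hu' hv' ne.
case: (boolP (e u' v')) => // nuv; exfalso.
have hc2 := c2_count hs hd duv.
move: hu' hv'; rewrite !inE => /andP[uu' vu'] /andP[uv' vv'].
have uv : u != v by rewrite eq_sym -(@dist0 _ e) duv.
have nuv2 : ~~ e u v by rewrite -(@dist1 _ e _ _ irr) duv.
have xu : e u' u by rewrite sym.
have xv : e u' v by rewrite sym.
have S0sub : [set u; v] \subset D u'.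
  by rewrite subUset !sub1set !inE xu xv.
have S0ind : indep e [set u; v].
  move=> s s'; rewrite !inE => /orP[]/eqP-> /orP[]/eqP->.
  - by rewrite eqxx.
  - by move=> _.
  - by rewrite sym.
  - by rewrite eqxx.
have hS0 : (#|[set u; v]| <= al)%N by rewrite cards2 uv.
have [S [s0S sub ind hS]] := core u' _ S0sub S0ind hS0.
have uS : u \in S by apply: (subsetP s0S); rewrite !inE eqxx.
have vS : v \in S by apply: (subsetP s0S); rewrite !inE eqxx orbT.
have h1 := count_ineq (hA u') sub; rewrite hk hS in h1.
have hY : forall y, y \in [set u'; v'] -> ~~ e u' y.
  by move=> y; rewrite !inE => /orP[]/eqP->; rewrite ?irr.
have hle := Gm_le hs xu xv uv nuv2 hY.
have Gs : (Gm e (D u') u v < c 2%N - 1)%N.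
  apply: leq_ltn_trans hle _.
  have hsub : common_nbrs e u v :\: [set u'; v'] \subset common_nbrs e u v :\ u' :\ v'.
    apply/subsetP => z; rewrite !inE negb_or => /andP[/andP[-> ->] ->]; done.
  apply: leq_ltn_trans (subset_leq_card hsub) _.
  move: hc2; rewrite (cardsD1 u' (common_nbrs e u v)) (cardsD1 v' (common_nbrs e u v :\ u')).
  rewrite !inE uu' vu' uv' vv' eq_sym ne /=.
  by move=> <-; rewrite !add1n subn1 ltnSn.
have Gs' : Gm e (D u') v u = Gm e (D u') u v by apply: eq_bigr => z _; rewrite andbC.
have h2 := P_bound_strict (F := Gm e (D u')) (S := S) (B := (c 2%N - 1)%N).
have {h2} h2 : (\sum_(s in S) \sum_(s' in S :\ s) Gm e (D u') s s' + 2 <= al * (al.-1 * (c 2%N - 1)))%N.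
  rewrite -hS; apply: (h2 u v) => //; last by rewrite Gs'.
  move=> s s' sS s'S ne'; apply: Gb; rewrite ?(subsetP sub) //.
  exact: ind.
rewrite mulnA bin -mulnA in h2.
have : q < (c 2%N)%:R - 1.
  apply: rat_lt => //; rewrite addn1.
  move: h1 h2; move: (\sum_(s in S) \sum_(s' in S :\ s) Gm e (D u') s s')%N => P.
  move: ('C(al, 2) * (c 2%N - 1))%N => Y; move: (al * a1.+1)%N => A.
  clear; lia.
by rewrite -hq ltxx.
Qed.
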